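(* For every instance $I$ of University Dual Admission, the associated hypergraph $\mathcal{H}_I$ is a network hypergraph; in particular its incidence matrix is totally unimodular.
   Context: UDA instance: universities $U$, disjoint program sets $P_i$ for each $u_i\in U$ ($P=\bigcup_i P_i$), students $S$; an acceptable triple is $(s_j,u_i,p_{ik})$ with $p_{ik}\in P_i$ acceptable to student $s_j$. The associated hypergraph $\mathcal{H}_I$ has vertex set $S\cup U\cup P$ and one hyperedge $\{s_j,u_i,p_{ik}\}$ for each acceptable triple. The incidence matrix of a hypergraph $(V,\mathcal{E})$ is the $|V|\times|\mathcal{E}|$ 0/1 matrix with entry 1 at $(v,e)$ iff $v\in e$. A matrix $A$ is a network matrix if there is a directed graph $D=(V,E)$ and $F\subseteq E$ forming a spanning tree of $D$ in the undirected sense, such that rows of $A$ are indexed by $F$, columns by $E\setminus F$, and the entry at $(f,e)$ is $1$ if $f$ lies on the unique (undirected) cycle $C_{e,f}$ of $F\cup\{e\}$ with the same orientation as $e$ along it, $-1$ if it lies on it with opposite orientation, and $0$ if $f$ is not on it. A hypergraph is a network hypergraph if its incidence matrix is a network matrix. *)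

(* Defs.v *)
From HB Require Import structures.
From mathcomp Require Import all_boot all_order all_algebra.
Set Implicit Arguments. Unset Strict Implicit. Unset Printing Implicit Defensive.
Import GRing.Theory Num.Theory.
Local Open Scope ring_scope.

Section Digraph.
Variables (N Arc : finType) (tl hd : Arc -> N).

(* A dart (a, b): arc a traversed forward (tl -> hd) if b, backward otherwise. *)
Definition dsrc (d : Arc * bool) : N := if d.2 then tl d.1 else hd d.1.
Definition ddst (d : Arc * bool) : N := if d.2 then hd d.1 else tl d.1.

Fixpoint walk_ok (x : N) (s : seq (Arc * bool)) (y : N) : bool :=
  match s with
  | [::] => x == y
  | d :: s' => (dsrc d == x) && walk_ok (ddst d) s' y
  end.

Definition trail_in (F : pred Arc) (x : N) (s : seq (Arc * bool)) (y : N) : bool :=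
  [&& walk_ok x s y, uniq (map fst s) & all (fun d => F d.1) s].

Definition spanning_tree (F : pred Arc) : Prop :=
  (forall x y : N, exists s, trail_in F x s y) /\
  (forall (x : N) (s : seq (Arc * bool)), trail_in F x s x -> s = [::]).
End Digraph.

(** Rows indexed by the finite type R (tree arcs F), columns by C (arcs E \ F);
   the arc set of D is R + C.  For a non-tree arc e = (u,v), the cycle C_{e,f}
   of F + e, oriented along e, is e followed by the (unique) tree path from
   hd e = v back to tl e = u; entry (f,e) is 1 / -1 / 0 according as f is
   traversed forward / backward / not at all on that path. *)
Definition network_matrix (R C : finType) (A : R -> C -> int) : Prop :=
  exists (N : finType) (tl hd : R + C -> N),
    spanning_tree tl hd (fun a => if a is inl _ then true else false) /\
    forall e : C, exists s : seq ((R + C) * bool),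
      trail_in tl hd (fun a => if a is inl _ then true else false)
               (hd (inr e)) s (tl (inr e)) /\
      forall f : R, A f e = if (inl f, true) \in s then 1
                            else if (inl f, false) \in s then -1 else 0.

Definition incidence_matrix (V E : finType) (edge : E -> {set V}) : V -> E -> int :=
  fun v e => if v \in edge e then 1 else 0.

Definition network_hypergraph (V E : finType) (edge : E -> {set V}) : Prop :=
  network_matrix (incidence_matrix edge).

(* Total unimodularity: every square submatrix has determinant in {-1,0,1}
   (row/column selections with repetitions only add zero determinants). *)
Definition totally_unimodular (R C : finType) (A : R -> C -> int) : Prop :=
  forall (k : nat) (f : 'I_k -> R) (g : 'I_k -> C),
    \det (\matrix_(i, j) A (f i) (g j)) \in [:: -1; 0; 1].

(** Students S, universities U, programs P; [univ p] is the university whose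
   program set contains p (so the P_i are disjoint and cover P); [acc s p]
   says program p is acceptable to student s, giving the acceptable triple
   (s, univ p, p). *)
Record UDA := {
  uda_S : finType; uda_U : finType; uda_P : finType;
  uda_univ : uda_P -> uda_U;
  uda_acc : uda_S -> uda_P -> bool }.

Definition uda_vertex (I : UDA) : finType := ((uda_S I + uda_U I) + uda_P I)%type.

Definition uda_triple (I : UDA) : finType :=
  {x : (uda_S I * uda_P I)%type | @uda_acc I x.1 x.2}.

Definition uda_edge (I : UDA) (t : uda_triple I) : {set uda_vertex I} :=
  [set (inl (inl (val t).1) : uda_vertex I);
       inl (inr (@uda_univ I (val t).2));
       inr (val t).2].

(* Main.v *)
Require Import Defs.
From mathcomp Require Import all_boot all_order all_algebra zify.
Set Implicit Arguments. Unset Strict Implicit. Unset Printing Implicit Defensive.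
Import GRing.Theory Num.Theory.
Local Open Scope ring_scope.

Lemma eq_inl (A B : eqType) (x y : A) : (inl x == inl y :> A + B) = (x == y).
Proof. by []. Qed.
Lemma eq_inr (A B : eqType) (x y : B) : (inr x == inr y :> A + B) = (x == y).
Proof. by []. Qed.
Lemma eq_inlr (A B : eqType) (x : A) (y : B) : (inl x == inr y :> A + B) = false.
Proof. by []. Qed.
Lemma eq_inrl (A B : eqType) (x : B) (y : A) : (inr x == inl y :> A + B) = false.
Proof. by []. Qed.
Lemma eq_Some (A : eqType) (x y : A) : (Some x == Some y) = (x == y).
Proof. by []. Qed.
Lemma eq_SomeN (A : eqType) (x : A) : (Some x == None) = false.
Proof. by []. Qed.
Lemma eq_NSome (A : eqType) (x : A) : (None == Some x) = false.
Proof. by []. Qed.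
Definition sumE := (eq_inl, eq_inr, eq_inlr, eq_inrl, eq_Some, eq_SomeN, eq_NSome).


Lemma sum_ind (k : nat) (P : pred 'I_k) (b : 'I_k -> bool) :
  \sum_(i | P i) (if b i then 1 else 0) = (#|[pred i | P i && b i]|)%:R :> int.
Proof.
by rewrite -big_mkcondr /= -sumr_const.
Qed.

Lemma bip_tu k (M : 'M[int]_k) (c : 'I_k -> bool) :
  (forall i j, M i j \in [:: 0; 1]) ->
  (forall j i1 i2, M i1 j = 1 -> M i2 j = 1 -> c i1 = c i2 -> i1 = i2) ->
  \det M \in [:: -1; 0; 1].
Proof.
elim: k M c => [|k IH] M c H01 Hinj.
  by rewrite det_mx00 !inE eqxx !orbT.
have HM i j : M i j = if M i j == 1 then 1 else 0.
  by move: (H01 i j); rewrite !inE => /orP[]/eqP->.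
have [j /card1P [i0 Hi0] |Hno] := pickP (fun j => #|[pred i | M i j == 1]| == 1%N).
  rewrite (expand_det_col _ j) (bigD1 i0) //= big1 ?addr0; last first.
    move=> i Hi; rewrite HM.
    have := Hi0 i; rewrite !inE (negbTE Hi) => ->; by rewrite mul0r.
  have := Hi0 i0; rewrite !inE eqxx => /eqP ->; rewrite mul1r /cofactor.
  have : \det (row' i0 (col' j M)) \in [:: -1; 0; 1].
    apply: (IH _ (fun a => c (lift i0 a))); first by move=> a b; rewrite !mxE.
    move=> b a1 a2; rewrite !mxE => h1 h2 h3; exact: (lift_inj (Hinj _ _ _ h1 h2 h3)).
  rewrite -signr_odd; case: (odd _); rewrite ?expr1 ?expr0 ?mul1r; last by rewrite !inE.
    rewrite mulN1r !inE => /or3P[]/eqP->; rewrite ?opprK ?oppr0 eqxx ?orbT //.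
suff /eqP-> : \det M == 0 by rewrite !inE eqxx orbT.
apply/det0P; exists (\row_i (if c i then 1 else -1)).
  apply/eqP => /rowP /(_ ord0); rewrite !mxE; case: (c _) => /eqP.
    by rewrite oner_eq0.
  by rewrite oppr_eq0 oner_eq0.
apply/rowP => j; rewrite !mxE.
under eq_bigr do rewrite mxE.
rewrite (bigID c) /=.
under eq_bigr => i ci do rewrite ci mul1r HM.
under [X in _ + X]eq_bigr => i ci do rewrite (negbTE ci) mulN1r HM.
rewrite sumrN !sum_ind.
have le1 b : (#|[pred i | (c i == b) && (M i j == 1)]| <= 1)%N.
  apply/card_le1_eqP => x y; rewrite !inE => /andP[/eqP cx /eqP Mx] /andP[/eqP cy /eqP My].
  by apply: (Hinj j); rewrite // cx cy.
have := le1 true; have := le1 false.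
have := Hno j; rewrite /= -(cardID c).
have e1 : #|[predI [pred i | M i j == 1] & c]| = #|[pred i | c i & M i j == 1]|.
  by apply: eq_card => i; rewrite !inE andbC.
have e2 : #|[predD [pred i | M i j == 1] & c]| = #|[pred i | ~~ c i & M i j == 1]|.
  by apply: eq_card => i; rewrite !inE andbC.
have e3 : #|[pred i | c i == false & M i j == 1%Z]| = #|[pred i | ~~ c i & M i j == 1]|.
  by apply: eq_card => i; rewrite !inE; case: (c i).
have e4 : #|[pred i | c i == true & M i j == 1%Z]| = #|[pred i | c i & M i j == 1]|.
  by apply: eq_card => i; rewrite !inE; case: (c i).
rewrite e1 e2 e3 e4 => /negbT h1 h2 h3.
suff -> : #|[pred i | c i & M i j == 1]| = #|[pred i | ~~ c i & M i j == 1]| by rewrite subrr.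
lia.
Qed.

Section Net.
Variable I : UDA.
Notation V := (uda_vertex I).
Notation T := (uda_triple I).
Notation inc := (incidence_matrix (@uda_edge I)).

Lemma incS s' (t : T) : inc (inl (inl s')) t = (s' == (val t).1)%:R.
Proof. by rewrite /incidence_matrix /uda_edge !inE /= !sumE ?orbF; case: eqP. Qed.
Lemma incU u (t : T) : inc (inl (inr u)) t = (u == uda_univ (val t).2)%:R.
Proof. by rewrite /incidence_matrix /uda_edge !inE /= !sumE ?orbF; case: eqP. Qed.
Lemma incP p (t : T) : inc (inr p) t = (p == (val t).2)%:R.
Proof. by rewrite /incidence_matrix /uda_edge !inE /= !sumE ?orbF; case: eqP. Qed.

Lemma tu_uda : totally_unimodular (incidence_matrix (@uda_edge I)).
Proof.
move=> k f g.
set M := \matrix_(i, j) _.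
have [[i1 i2] /= /andP[ne feq] | finj] :=
  pickP (fun ij : 'I_k * 'I_k => (ij.1 != ij.2) && (f ij.1 == f ij.2)).
  rewrite (determinant_alternate ne) ?inE ?eqxx ?orbT //.
  by move=> j; rewrite !mxE (eqP feq).
have {}finj : injective f.
  move=> i1 i2 e; apply/eqP; apply/negPn/negP => ne.
  by have := finj (i1, i2); rewrite /= ne e eqxx.
pose E : 'M[int]_k := \matrix_(i, a)
  (if f a is inr p then (f i == inl (inr (uda_univ p)))%:R else 0).
have EE : E *m E = 0.
  apply/matrixP => i b; rewrite !mxE; apply: big1 => a _; rewrite !mxE.
  case: (f a) => [v|p] /=; first by rewrite mul0r.
  by case: (f b) => [?|?]; rewrite ?sumE ?mulr0.
have detL : (\det (1%:M - E) == 1) || (\det (1%:M - E) == -1).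
  have h : (1%:M + E) *m (1%:M - E) = 1%:M.
    by rewrite mulmxDl !mul1mx mulmxBr mulmx1 EE subr0 subrK.
  have := congr1 determinant h; rewrite det_mulmx det1 => /intUnitRing.unitzPl.
  by [].
pose eff i j : bool := match f i with
  | inl (inl s') => s' == (val (g j)).1
  | inl (inr u) => (u == uda_univ (val (g j)).2) && [forall a, f a != inr (val (g j)).2]
  | inr p' => p' == (val (g j)).2 end.
have Mp i j : ((1%:M - E) *m M) i j = (eff i j)%:R.
  rewrite mulmxBl mul1mx !mxE /eff.
  under eq_bigr do rewrite !mxE.
  case Efi: (f i) => [[s'|u]|p'].
  - rewrite big1 ?subr0 ?incS // => a _; by case: (f a) => [v|p]; rewrite ?sumE mul0r.
  - have [Hall|Hex] := boolP [forall a, f a != inr (val (g j)).2].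
    + rewrite big1 ?subr0 ?incU ?andbT // => a _.
      have := forallP Hall a; case: (f a) => [v|p] /=; first by rewrite mul0r.
      move=> h; rewrite incP; have [ep|nep] := eqVneq p (val (g j)).2.
        by rewrite ep eqxx in h.
        by rewrite [X in _ * X]mulr0n mulr0.
    + have [a0 Ha0] : exists a0, f a0 = inr (val (g j)).2.
        move/forallPn: Hex => [a0 /negPn/eqP]; by exists a0.
      rewrite (bigD1 a0) //= big1 ?addr0.
        by rewrite Ha0 incP eqxx mulr1 incU eq_inl andbF subrr.
      move=> a ne; case Efa: (f a) => [?|p]; first by rewrite mul0r.
      rewrite incP; have [ep|nep] := eqVneq p (val (g j)).2; last by rewrite mulr0.
      by move: ne; rewrite (finj a a0) ?eqxx // Efa Ha0 ep.
  - rewrite big1 ?subr0 ?incP // => a _; by case: (f a) => [v|p]; rewrite ?sumE mul0r.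
have H1 : \det ((1%:M - E) *m M) \in [:: -1; 0; 1].
  apply: (@bip_tu k ((1%:M - E) *m M) (fun i => if f i is inl (inl _) then true else false)).
    by move=> i j; rewrite Mp; case: (eff i j); rewrite !inE eqxx ?orbT.
  move=> j i1 i2; rewrite !Mp.
  have b1 (b : bool) : b%:R = 1 :> int -> b by case: b => // /eqP; rewrite eq_sym oner_eq0.
  move=> /b1 e1 /b1 e2 ec; apply: finj; move: e1 e2 ec; rewrite /eff.
  case E1: (f i1) => [[s1|u1]|p1]; case E2: (f i2) => [[s2|u2]|p2] //.
  - by move=> /eqP-> /eqP->.
  - by move=> /andP[/eqP-> _] /andP[/eqP-> _].
  - by move=> /andP[_ /forallP /(_ i2)]; rewrite E2 => /eqP H /eqP Hp; case: H; rewrite Hp.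
  - by move=> /eqP Hp /andP[_ /forallP /(_ i1)]; rewrite E1 => /eqP H; case: H; rewrite Hp.
  - by move=> /eqP-> /eqP->.
move: H1; rewrite det_mulmx.
case/orP: detL => /eqP->; rewrite ?mul1r // mulN1r !inE.
by rewrite !eqr_oppLR opprK oppr0 orbC (orbC (_ == 0)) orbA.
Qed.

Definition ntl (a : V + T) : option V := match a with
 | inl (inl (inl s)) => None
 | inl (inl (inr u)) => Some (inl (inr u) : V)
 | inl (inr p) => Some (inr p : V)
 | inr t => Some (inl (inl (val t).1) : V) end.
Definition nhd (a : V + T) : option V := match a with
 | inl (inl (inl s)) => Some (inl (inl s) : V)
 | inl (inl (inr u)) => None
 | inl (inr p) => Some (inl (inr (uda_univ p)) : V)
 | inr t => Some (inr (val t).2 : V) end.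
Definition Ft (a : V + T) : bool := if a is inl _ then true else false.

Definition cyc (t : T) : seq ((V + T) * bool) :=
  [:: (inl (inr (val t).2 : V), true); (inl (inl (inr (uda_univ (val t).2)) : V), true);
      (inl (inl (inl (val t).1) : V), true)].

Lemma cyc_ok t : trail_in ntl nhd Ft (nhd (inr t)) (cyc t) (ntl (inr t)).
Proof. by rewrite /trail_in /= !eqxx. Qed.

Lemma cyc_entry (t : T) (v : V) :
  inc v t = if (inl v, true) \in cyc t then 1 else if (inl v, false) \in cyc t then -1 else 0.
Proof.
rewrite !inE /= !xpair_eqE !andbT !andbF !eq_inl.
case: v => [[s|u]|p]; rewrite ?incS ?incU ?incP !sumE ?orbF ?orFb //=;
  by case: eqP.
Qed.

Definition pot (a : V) (n : option V) : int := match a with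
 | inl (inl s) => (n == Some (inl (inl s) : V))%:R
 | inl (inr u) => 1 - (match n with Some (inl (inr u')) => u' == u
                        | Some (inr p) => uda_univ p == u | _ => false end)%:R
 | inr p => 1 - (n == Some (inr p : V))%:R end.

Lemma pot_arc a b : pot a (nhd (inl b)) - pot a (ntl (inl b)) = (b == a)%:R.
Proof.
case: a => [[s|u]|p]; case: b => [[s'|u']|p'] /=; rewrite ?sumE /=;
  try case: eqP => _; lia.
Qed.

Lemma conn x y : exists s, trail_in ntl nhd Ft x s y.
Proof.
have [->|nxy] := eqVneq x y; first by exists [::]; rewrite /trail_in /= eqxx.
pose aS s : V + T := inl (inl (inl s)).
pose aU u : V + T := inl (inl (inr u)).
pose aP p : V + T := inl (inr p).
case: x nxy => [[[s|u]|p]|]; case: y => [[[s'|u']|p']|] nxy; rewrite ?sumE in nxy.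
- by exists [:: (aS s, false); (aS s', true)]; rewrite /trail_in /= ?inE ?sumE ?eqxx /= ?andbT // eq_sym.
- by exists [:: (aS s, false); (aU u', false)]; rewrite /trail_in /= ?inE ?sumE ?eqxx.
- by exists [:: (aS s, false); (aU (uda_univ p'), false); (aP p', false)]; rewrite /trail_in /= ?inE ?sumE ?eqxx.
- by exists [:: (aS s, false)]; rewrite /trail_in /= ?inE ?sumE ?eqxx.
- by exists [:: (aU u, true); (aS s', true)]; rewrite /trail_in /= ?inE ?sumE ?eqxx.
- by exists [:: (aU u, true); (aU u', false)]; rewrite /trail_in /= ?inE ?sumE ?eqxx /= ?andbT.
- have [e|ne] := eqVneq (uda_univ p') u.
    by exists [:: (aP p', false)]; rewrite /trail_in /= ?inE ?sumE ?eqxx /= e eqxx.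
  exists [:: (aU u, true); (aU (uda_univ p'), false); (aP p', false)].
    by rewrite /trail_in /= ?inE ?sumE ?eqxx /= ?andbT orbF eq_sym.
- by exists [:: (aU u, true)]; rewrite /trail_in /= ?inE ?sumE ?eqxx.
- by exists [:: (aP p, true); (aU (uda_univ p), true); (aS s', true)]; rewrite /trail_in /= ?inE ?sumE ?eqxx.
- have [e|ne] := eqVneq (uda_univ p) u'.
    by exists [:: (aP p, true)]; rewrite /trail_in /= ?inE ?sumE ?eqxx /= e eqxx.
  by exists [:: (aP p, true); (aU (uda_univ p), true); (aU u', false)];
    rewrite /trail_in /= ?inE ?sumE ?eqxx /= ?andbT.
- have [e|ne] := eqVneq (uda_univ p) (uda_univ p').
    by exists [:: (aP p, true); (aP p', false)]; rewrite /trail_in /= ?inE ?sumE ?eqxx /= e eqxx ?andbT.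
  exists [:: (aP p, true); (aU (uda_univ p), true); (aU (uda_univ p'), false); (aP p', false)].
    rewrite /trail_in /= ?inE ?sumE ?eqxx /= ?andbT.
    by rewrite orbF (negbTE ne) andbT; apply: contraNneq ne => ->.
- by exists [:: (aP p, true); (aU (uda_univ p), true)]; rewrite /trail_in /= ?inE ?sumE ?eqxx.
- by exists [:: (aS s', true)]; rewrite /trail_in /= ?inE ?sumE ?eqxx.
- by exists [:: (aU u', false)]; rewrite /trail_in /= ?inE ?sumE ?eqxx.
- by exists [:: (aU (uda_univ p'), false); (aP p', false)]; rewrite /trail_in /= ?inE ?sumE ?eqxx.
- by [].
Qed.

Arguments nhd : simpl never.
Arguments ntl : simpl never.
Arguments pot : simpl never.
Lemma walk_pot a x s y : walk_ok ntl nhd x s y -> all (fun d => Ft d.1) s ->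
  pot a y - pot a x = (count (fun d => (d.1 == inl a) && d.2) s)%:R
                     - (count (fun d => (d.1 == inl a) && ~~ d.2) s)%:R.
Proof.
elim: s x => [|[[b|e] dir] s IH] x /=.
  by move=> /eqP-> _; rewrite subrr.
- move=> /andP[/eqP <- W] A; have := IH _ W A => {}IH.
  rewrite -[pot a y](subrK (pot a (ddst ntl nhd (inl b, dir)))) IH.
  have P := pot_arc a b; clear W IH; case: dir.
    rewrite /ddst /dsrc /= eq_inl; case: (b == a) P => /= P; lia.
  rewrite /ddst /dsrc /= eq_inl; case: (b == a) P => /= P; lia.
- by [].
Qed.

Lemma acyc x s : trail_in ntl nhd Ft x s x -> s = [::].
Proof.
case: s => [//|[[a|e] dir] s] /andP[W /andP[U A]]; last by [].
have := walk_pot a W A; rewrite subrr => /eqP; rewrite eq_sym subr_eq0 => /eqP.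
move=> /eqP; rewrite eqr_nat => /eqP Hc.
have : (count (fun d => (d.1 == inl a) && d.2) ((inl a, dir) :: s) +
       count (fun d => (d.1 == inl a) && ~~ d.2) ((inl a, dir) :: s) <= 1)%N.
  have -> : forall r : seq ((V + T) * bool),
      (count (fun d => (d.1 == inl a) && d.2) r + count (fun d => (d.1 == inl a) && ~~ d.2) r)%N
      = count_mem (inl a) (map fst r).
    elim=> [//|d r IHr] /=; rewrite -IHr eq_sym; case: (d.1 == inl a); case: d.2 => /=; lia.
  by rewrite count_uniq_mem // leq_b1.
move: Hc; rewrite /= eqxx; clear W U A; case: dir => /= Hc H; exfalso; lia.
Qed.
End Net.

Theorem theorem3p2 (I : UDA) :
  network_hypergraph (@uda_edge I) /\
  totally_unimodular (incidence_matrix (@uda_edge I)).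
Proof.
split; last exact: tu_uda.
exists (option (uda_vertex I)), (@ntl I), (@nhd I); split.
  split; [exact: conn | exact: acyc].
move=> e; exists (cyc e); split; [exact: cyc_ok | exact: cyc_entry].
Qed.
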